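(* Let $\mathcal{V},\mathcal{W}$ be real, separable, infinite-dimensional Hilbert spaces, fix $c>0$ and $p\in[1,\infty]$, and let $\mathcal{X}=\{v\in\mathcal{V}:\|v\|\le1\}$, $\mathcal{Y}=\{w\in\mathcal{W}:\|w\|\le c\}$, $\mathcal{F}_p=\{f\in S_p(\mathcal{V},\mathcal{W}):\|f\|_p\le c\}$. Then for every $T\in\mathbb{N}$, \[\inf_{\mathcal{A}}\mathtt{R}_{\mathcal{A}}(T,\mathcal{F}_p)\ge c^2\,T^{1-\frac1p}\] (with $1/p=0$ for $p=\infty$), the infimum being over all (possibly randomized) online learning algorithms. In particular $\mathcal{F}_\infty$ is not online learnable.
   Context: For a compact linear operator $f:\mathcal{V}\to\mathcal{W}$ with singular values $(s_n(f))_{n\ge1}$, $\|f\|_p=(\sum_n s_n(f)^p)^{1/p}$ for $p\in[1,\infty)$ and $\|f\|_\infty=\sup_n s_n(f)$; $S_p(\mathcal{V},\mathcal{W})$ is the set of compact linear operators with $\|f\|_p<\infty$. Online protocol: for $t=1,\dots,T$, an adversary picks $(x_t,y_t)\in\mathcal{X}\times\mathcal{Y}$ and reveals $x_t$; the learner $\mathcal{A}$, using past labeled examples and $x_t$ (and possibly internal randomness), predicts $\mathcal{A}(x_t)\in\mathcal{Y}$; then $y_t$ is revealed, with loss $\|\mathcal{A}(x_t)-y_t\|^2$. The regret is \[\mathtt{R}_{\mathcal{A}}(T,\mathcal{F})=\sup_{(x_1,y_1),\dots,(x_T,y_T)}\mathbb{E}\Big[\sum_{t=1}^T\|\mathcal{A}(x_t)-y_t\|^2-\inf_{f\in\mathcal{F}}\sum_{t=1}^T\|f(x_t)-y_t\|^2\Big].\]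 A class $\mathcal{F}$ is online learnable if some algorithm has regret that is a non-decreasing sublinear function of $T$. *)

(* Defs.v *)
From mathcomp Require Import all_boot all_order all_algebra.
From mathcomp Require Import all_classical all_reals all_analysis.
Set Implicit Arguments. Unset Strict Implicit. Unset Printing Implicit Defensive.
Import Order.TTheory GRing.Theory Num.Theory.
Import numFieldNormedType.Exports.
Local Open Scope classical_set_scope.
Local Open Scope ring_scope.

Section Defs.
Variable R : realType.

Definition inner_product (V : normedModType R) (ip : V -> V -> R) : Prop :=
  [/\ (forall u v, ip u v = ip v u),
      (forall (a : R) (u v w : V), ip (a *: u + v) w = a * ip u w + ip v w)
    & (forall v, ip v v = `|v| ^+ 2)].

(* A real Hilbert space is a complete normed space (completeNormedModType)
   whose norm comes from an inner product [ip] satisfying [inner_product ip]. *)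

Definition separable (V : completeNormedModType R) : Prop :=
  exists D : set V, countable D /\ closure D = setT.

Definition infinite_dimensional (V : completeNormedModType R) : Prop :=
  forall (n : nat) (e : 'I_n -> V),
    exists v : V, forall a : 'I_n -> R, v <> \sum_(i < n) a i *: e i.

Definition linear_op (V W : normedModType R) (f : V -> W) : Prop :=
  forall (a : R) (u v : V), f (a *: u + v) = a *: f u + f v.

Definition compact_op (V W : normedModType R) (f : V -> W) : Prop :=
  linear_op f /\ compact (closure (f @` [set v : V | `|v| <= 1])).

Definition orthonormal (V : normedModType R) (ip : V -> V -> R) (e : nat -> V)
  : Prop := forall i j : nat, ip (e i) (e j) = (i == j)%:R.

(* [s] (indexed from 0, i.e. s n = s_{n+1}(f) in the paper) is the sequence of
   singular values of [f]: the Schmidt representation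
     f v = sum_n s_n <v, e_n> u_n
   with orthonormal (e_n), (u_n) and s nonnegative, nonincreasing
   (padded with zeros if f has finite rank).  This determines s uniquely
   (s_n^2 are the eigenvalues of f^* f in decreasing order, with multiplicity). *)
Definition singular_values (V W : normedModType R)
    (ipV : V -> V -> R) (ipW : W -> W -> R) (f : V -> W) (s : nat -> R) : Prop :=
  (forall n, 0 <= s n) /\ (forall n, s n.+1 <= s n) /\
  exists (e : nat -> V) (u : nat -> W),
    [/\ orthonormal ipV e, orthonormal ipW u &
        forall v : V, series (fun n => (s n * ipV v (e n)) *: u n) @ \oo --> f v].

Definition schatten_norm (p : \bar R) (s : nat -> R) : \bar R :=
  match p with
  | r%:E => ((\sum_(0 <= n <oo) ((s n) `^ r)%:E) `^ (r^-1))%E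
  | _ => ereal_sup (range (fun n => (s n)%:E))
  end.

Definition Fp (V W : normedModType R) (ipV : V -> V -> R) (ipW : W -> W -> R)
    (p : \bar R) (c : R) : set (V -> W) :=
  [set f | compact_op f /\
     exists s, singular_values ipV ipW f s /\ (schatten_norm p s <= c%:E)%E].

(* A (possibly randomized) online learner: its internal randomness is a point
   omega of a probability space; given omega, the past labeled examples and the
   current instance x_t it predicts an element of W. *)
Definition learner (T : Type) (V W : Type) := T -> seq (V * W) -> V -> W.

(* Validity: predictions lie in Y = {w : |w| <= c}, and the prediction is a
   (Borel) random variable: omega |-> |A omega h x - w| measurable for every w
   (equivalent to Borel measurability into the separable space W). *)
Definition valid_learner (V W : normedModType R) (d : measure_display)
    (Om : measurableType d) (P : probability Om R) (c : R)
    (A : learner Om V W) : Prop :=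
  (forall om h x, `|A om h x| <= c) /\
  (forall h x (w : W), measurable_fun setT (fun om => `|A om h x - w|)).

Definition history (V W : Type) (x : nat -> V) (y : nat -> W) (t : nat)
  : seq (V * W) := [seq (x i, y i) | i <- iota 0 t].

Definition regret (V W : normedModType R) (d : measure_display)
    (Om : measurableType d) (P : probability Om R) (A : learner Om V W)
    (c : R) (F : set (V -> W)) (T : nat) : \bar R :=
  ereal_sup [set r : \bar R | exists (x : nat -> V) (y : nat -> W),
    [/\ (forall t, `|x t| <= 1), (forall t, `|y t| <= c) &
     r = ((\int[P]_om (\sum_(t < T) `|A om (history x y t) (x t) - y t| ^+ 2)%:E)
          - ereal_inf [set (\sum_(t < T) `|f (x t) - y t| ^+ 2)%:E | f in F])%E]].

Definition online_learnable (V W : normedModType R) (c : R) (F : set (V -> W))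
  : Prop :=
  exists (d : measure_display) (Om : measurableType d) (P : probability Om R)
         (A : learner Om V W),
    valid_learner P c A /\
    exists g : nat -> R,
      [/\ {homo g : m n / (m <= n)%N >-> m <= n},
          (fun n : nat => g n / n%:R) @ \oo --> 0
        & forall T : nat, regret P A c F T = (g T)%:E].

Definition rate_exp (p : \bar R) : R :=
  match p with r%:E => 1 - r^-1 | _ => 1 end.

End Defs.

(* Main.v *)
Require Import Defs.
From mathcomp Require Import all_boot all_order all_algebra.
From mathcomp Require Import all_classical all_reals all_analysis.
From mathcomp Require Import ring lra measurable_realfun.
Import Order.TTheory GRing.Theory Num.Theory.
Import numFieldNormedType.Exports.
Local Open Scope classical_set_scope.
Local Open Scope ring_scope.
Set Implicit Arguments. Unset Strict Implicit. Unset Printing Implicit Defensive.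

Lemma ipC (R : realType) (V : normedModType R) (ip : V -> V -> R) :
  inner_product ip -> forall u v, ip u v = ip v u.
Proof. by case. Qed.

Lemma ipnorm (R : realType) (V : normedModType R) (ip : V -> V -> R) :
  inner_product ip -> forall v, ip v v = `|v| ^+ 2.
Proof. by case. Qed.

Lemma ip0l (R : realType) (V : normedModType R) (ip : V -> V -> R) :
  inner_product ip -> forall w, ip 0 w = 0.
Proof.
case=> _ h _ w; have := h 1 0 0 w; rewrite scale1r addr0 mul1r.
move/(congr1 (fun x => x - ip 0 w)); rewrite subrr addrK => <-.
by [].
Qed.

Lemma ipDl (R : realType) (V : normedModType R) (ip : V -> V -> R) :
  inner_product ip -> forall u v w, ip (u + v) w = ip u w + ip v w.
Proof. by case=> _ h _ u v w; have := h 1 u v w; rewrite scale1r mul1r. Qed.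

Lemma ipZl (R : realType) (V : normedModType R) (ip : V -> V -> R) :
  inner_product ip -> forall a u w, ip (a *: u) w = a * ip u w.
Proof.
move=> hip a u w; have [_ h _] := hip.
by rewrite -[a *: u]addr0 h (ip0l hip) addr0.
Qed.

Lemma ipNl (R : realType) (V : normedModType R) (ip : V -> V -> R) :
  inner_product ip -> forall u w, ip (- u) w = - ip u w.
Proof. by move=> hip u w; rewrite -scaleN1r (ipZl hip) mulN1r. Qed.

Lemma ipBl (R : realType) (V : normedModType R) (ip : V -> V -> R) :
  inner_product ip -> forall u v w, ip (u - v) w = ip u w - ip v w.
Proof. by move=> hip u v w; rewrite (ipDl hip) (ipNl hip). Qed.

Lemma ipDr (R : realType) (V : normedModType R) (ip : V -> V -> R) :
  inner_product ip -> forall u v w, ip w (u + v) = ip w u + ip w v.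
Proof. by move=> hip u v w; rewrite !(ipC hip w) (ipDl hip). Qed.

Lemma ipZr (R : realType) (V : normedModType R) (ip : V -> V -> R) :
  inner_product ip -> forall a u w, ip w (a *: u) = a * ip w u.
Proof. by move=> hip a u w; rewrite !(ipC hip w) (ipZl hip). Qed.

Lemma ipBr (R : realType) (V : normedModType R) (ip : V -> V -> R) :
  inner_product ip -> forall u v w, ip w (u - v) = ip w u - ip w v.
Proof. by move=> hip u v w; rewrite !(ipC hip w) (ipBl hip). Qed.

Lemma ip_suml (R : realType) (V : normedModType R) (ip : V -> V -> R) :
  inner_product ip -> forall n (F : 'I_n -> V) w,
  ip (\sum_(i < n) F i) w = \sum_(i < n) ip (F i) w.
Proof.
move=> hip n F w.
apply: (big_morph (fun v => ip v w)); first by move=> x y; exact: ipDl.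
exact: ip0l.
Qed.

Lemma sum_delta (R : realType) n (F : nat -> R) j : (j < n)%N ->
  \sum_(i < n) F i * ((i : nat) == j)%:R = F j.
Proof.
move=> hj; rewrite (bigD1 (Ordinal hj)) //= eqxx mulr1 big1 ?addr0 //.
move=> i /eqP hi; suff /negbTE -> : (i : nat) != j by rewrite mulr0.
by apply/eqP => e; apply: hi; apply: val_inj.
Qed.

Fixpoint build (T : Type) (d : T) (step : (nat -> T) -> nat -> T) (n : nat)
  : nat -> T :=
  match n with
  | 0 => fun _ => d
  | n.+1 => fun i => if (i < n)%N then build d step n i else step (build d step n) n
  end.
Definition seqb (T : Type) (d : T) (step : (nat -> T) -> nat -> T) (i : nat) :=
  build d step i.+1 i.

Lemma build_seqb T (d : T) step n i : (i < n)%N -> build d step n i = seqb d step i.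
Proof.
elim: n i => // n IH i; rewrite ltnS leq_eqVlt => /orP [/eqP -> | hi] /=.
  by rewrite /seqb /= ltnn.
by rewrite hi IH.
Qed.

Lemma seqb_step T (d : T) step :
  (forall f g n, (forall i, (i < n)%N -> f i = g i) -> step f n = step g n) ->
  forall n, seqb d step n = step (seqb d step) n.
Proof.
move=> hs n; rewrite /seqb /= ltnn; apply: hs => i hi; exact: build_seqb.
Qed.


Definition GS (R : realType) (V : completeNormedModType R) (ip : V -> V -> R)
  (infV : infinite_dimensional V) n (e : 'I_n -> V) : V :=
  let v := projT1 (cid (infV n e)) in
  let w := v - \sum_(i < n) ip v (e i) *: e i in `|w|^-1 *: w.

Lemma sum_delta_ord (R : realType) n (F : 'I_n -> R) j :
  \sum_(i < n) F i * (i == j)%:R = F j.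
Proof.
rewrite (bigD1 j) //= eqxx mulr1 big1 ?addr0 // => i /negbTE ->; by rewrite mulr0.
Qed.

Lemma GS_orth (R : realType) (V : completeNormedModType R) (ip : V -> V -> R)
  (hip : inner_product ip) (infV : infinite_dimensional V) n (e : 'I_n -> V) :
  (forall i j : 'I_n, ip (e i) (e j) = (i == j)%:R) ->
  (forall j, ip (GS ip infV e) (e j) = 0) /\ ip (GS ip infV e) (GS ip infV e) = 1.
Proof.
move=> he; rewrite /GS; case: (cid (infV n e)) => v hv /=.
set w := v - _.
have ipw j : ip w (e j) = 0.
  rewrite /w (ipBl hip) (ip_suml hip).
  under eq_bigr do rewrite (ipZl hip) he.
  by rewrite sum_delta_ord subrr.
have w0 : w != 0.
  apply/eqP => w0; apply: (hv (fun i => ip v (e i))).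
  by apply/eqP; rewrite -subr_eq0 -/w w0.
split; first by move=> j; rewrite (ipZl hip) ipw mulr0.
rewrite (ipnorm hip) normrZ normrV ?unitfE ?normr_eq0 // normr_id mulVf ?normr_eq0 //.
by rewrite expr1n.
Qed.

Definition GSseq (R : realType) (V : completeNormedModType R) (ip : V -> V -> R)
  (infV : infinite_dimensional V) : nat -> V :=
  seqb 0 (fun E n => GS ip infV (fun i : 'I_n => E i)).

Lemma GSseq_step (R : realType) (V : completeNormedModType R) (ip : V -> V -> R)
  (infV : infinite_dimensional V) n :
  GSseq ip infV n = GS ip infV (fun i : 'I_n => GSseq ip infV i).
Proof.
rewrite /GSseq seqb_step //= => f g m hfg.
have -> // : (fun i : 'I_m => f i) = (fun i : 'I_m => g i).
by apply: funext => i; apply: hfg.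
Qed.

Lemma GSseq_orth (R : realType) (V : completeNormedModType R) (ip : V -> V -> R)
  (hip : inner_product ip) (infV : infinite_dimensional V) :
  Defs.orthonormal ip (GSseq ip infV).
Proof.
set E := GSseq ip infV.
suff H : forall n, forall i j, (i < n)%N -> (j < n)%N -> ip (E i) (E j) = (i == j)%:R.
  by move=> i j; apply: (H (maxn i j).+1); rewrite ltnS ?leq_maxl ?leq_maxr.
elim=> // n IH i j.
have key : (forall j, (j < n)%N -> ip (E n) (E j) = 0) /\ ip (E n) (E n) = 1.
  have [h1 h2] := GS_orth hip infV (e := fun i : 'I_n => E i)
     (fun i j => IH i j (ltn_ord i) (ltn_ord j)).
  rewrite /E GSseq_step; split => // k hk.
  exact: (h1 (Ordinal hk)).
rewrite !ltnS => hi hj; move: hi hj; rewrite [(i <= n)%N]leq_eqVlt [(j <= n)%N]leq_eqVlt.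
move=> /orP[/eqP -> | hi] /orP[/eqP -> | hj].
- by rewrite eqxx key.2.
- by rewrite key.1 // (gtn_eqF hj).
- by rewrite (ipC hip) key.1 // (ltn_eqF hi).
- exact: IH.
Qed.


Fixpoint Kset (R : realType) (W : normedModType R) (w : nat -> W) (n : nat) : set W :=
  match n with
  | 0 => [set 0]
  | n.+1 => (fun p : W * R => p.1 + p.2 *: w n) @` (Kset w n `*` `[-1, 1])
  end.

Lemma Kset_compact (R : realType) (W : normedModType R) (w : nat -> W) n :
  compact (Kset w n).
Proof.
elim: n => [|n IH] /=; first exact: compact_set1.
apply: continuous_compact; last by apply: compact_setX => //; exact: segment_compact.
apply: continuous_subspaceT => p.
apply: continuousD; first exact: cvg_fst.
apply: continuousZ; first exact: cvg_snd.
exact: cvg_cst.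
Qed.

Lemma Kset_in (R : realType) (W : normedModType R) (w : nat -> W) n (l : nat -> R) :
  (forall i, `|l i| <= 1) -> Kset w n (\sum_(i < n) l i *: w i).
Proof.
move=> hl; elim: n => [|n IH] /=; first by rewrite big_ord0.
exists (\sum_(i < n) l i *: w i, l n); last by rewrite big_ord_recr.
split => //=; rewrite in_itv /= -ler_norml; exact: hl.
Qed.

Lemma closure_Kset (R : realType) (W : normedModType R) (S : set W) w n :
  S `<=` Kset w n -> compact (closure S).
Proof.
move=> hS.
have cK : closed (Kset w n) := compact_closed (@norm_hausdorff _ _) (@Kset_compact _ _ w n).
apply: (subclosed_compact (@closed_closure _ S) (@Kset_compact _ _ w n)).
rewrite [X in _ `<=` X](closure_id _).1 //.
exact: closure_subset.
Qed.

Lemma ip_unit_le (R : realType) (V : normedModType R) (ip : V -> V -> R)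
  (hip : inner_product ip) (v e : V) : ip e e = 1 -> `|ip v e| <= `|v|.
Proof.
move=> he; set l := ip v e.
have h : 0 <= `|v| ^+ 2 - l ^+ 2.
  have -> : `|v| ^+ 2 - l ^+ 2 = ip (v - l *: e) (v - l *: e).
    rewrite !(ipBl hip) !(ipBr hip) !(ipZl hip) !(ipZr hip) he (ipC hip e v).
    rewrite (ipnorm hip) -/l; ring.
  by rewrite (ipnorm hip) sqr_ge0.
rewrite -(@ler_pXn2r _ 2) ?nnegrE // real_normK ?num_real //.
by rewrite -subr_ge0.
Qed.

Definition fcomp (R : realType) (V W : normedModType R) (ipV : V -> V -> R)
  (e : nat -> V) (u : nat -> W) (a : R) (T : nat) : V -> W :=
  fun v => \sum_(i < T) (a * ipV v (e i)) *: u i.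

Lemma fcomp_compact (R : realType) (V W : normedModType R) (ipV : V -> V -> R)
  (hip : inner_product ipV) (e : nat -> V) (u : nat -> W) (a : R) (T : nat) :
  (forall i, ipV (e i) (e i) = 1) -> compact_op (fcomp ipV e u a T).
Proof.
move=> he; split.
  move=> k x y; rewrite /fcomp scaler_sumr -big_split /=; apply: eq_bigr => i _.
  rewrite (ipDl hip) (ipZl hip) scalerA mulrDr scalerDl; congr (_ + _).
  by rewrite mulrCA.
apply: (closure_Kset (w := fun i => a *: u i) (n := T)).
move=> _ [v hv <-]; rewrite /fcomp.
have -> : \sum_(i < T) (a * ipV v (e i)) *: u i =
          \sum_(i < T) ipV v (e i) *: (a *: u i).
  by apply: eq_bigr => i _; rewrite scalerA mulrC.
apply: (@Kset_in _ _ (fun i => a *: u i) T (fun i => ipV v (e i))) => i; apply: le_trans (ip_unit_le hip v (he i)) _; exact: hv.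
Qed.


Definition svT (R : realType) (a : R) (T : nat) (n : nat) : R := if (n < T)%N then a else 0.

Lemma fcomp_sv (R : realType) (V W : normedModType R) (ipV : V -> V -> R)
  (ipW : W -> W -> R) (e : nat -> V) (u : nat -> W) (a : R) (T : nat) :
  0 <= a -> Defs.orthonormal ipV e -> Defs.orthonormal ipW u ->
  singular_values ipV ipW (fcomp ipV e u a T) (svT a T).
Proof.
move=> a0 he hu; split; first by move=> n; rewrite /svT; case: ifP.
split.
  move=> n; rewrite /svT; case: ifP => h1; case: ifP => h2 //.
  by rewrite ltnW in h2.
exists e, u; split => // v.
apply: cvg_near_cst; near=> N.
rewrite /series /= /fcomp.
have hN : (T <= N)%N by near: N; exact: nbhs_infty_ge.
rewrite (big_cat_nat (n := T)) //= [X in _ + X]big1_seq ?addr0; last first.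
  move=> i /andP[_]; rewrite mem_index_iota => /andP[hi _].
  by rewrite /svT ltnNge hi /= mul0r scale0r.
rewrite big_mkord; apply: eq_bigr => i _; by rewrite /svT ltn_ord.
Unshelve. all: by end_near.
Qed.

Lemma schatten_svT (R : realType) (p : \bar R) (c : R) (T : nat) :
  0 < c -> (0 < T)%N -> (1 <= p)%E ->
  (schatten_norm p (svT (c * T%:R `^ (rate_exp p - 1)) T) <= c%:E)%E.
Proof.
move=> c0 T0; case: p => [r||] //= hr; last first.
  apply: ge_ereal_sup => _ [n _ <-]; rewrite lee_fin /svT.
  case: ifP => _; last exact: ltW.
  by rewrite subrr powRr0 mulr1.
rewrite lee_fin in hr.
have r0 : r != 0 by apply/eqP => r0; rewrite r0 in hr; lra.
have -> : 1 - r^-1 - 1 = - r^-1 by ring.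
set a := c * _.
have Tpos : (0 : R) < T%:R by rewrite ltr0n.
have ha : a `^ r = c `^ r * T%:R^-1.
  rewrite /a powRM ?powR_ge0 ?(ltW c0) // -powRrM mulNr mulVf //.
  by rewrite powRN powRr1 // ltW.
rewrite (nneseries_split 0 T); last by move=> k _; rewrite lee_fin powR_ge0.
rewrite add0n [X in (_ + X)%E]eseries0; last first.
  by move=> i hi _; rewrite /svT ltnNge hi /= powR0.
rewrite adde0.
rewrite (eq_big_nat _ _ (F2 := fun _ => (a `^ r)%:E)); last first.
  by move=> i /andP[_ hi]; rewrite /svT hi.
rewrite sumEFin sumr_const_nat subn0 -mulr_natr ha -mulrA mulVf ?mulr1; last first.
  by rewrite gt_eqF.
rewrite poweR_EFin -powRrM mulfV // powRr1 //; exact: ltW.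
Qed.


Lemma unit_norm (R : realType) (V : normedModType R) (ip : V -> V -> R)
  (hip : inner_product ip) (v : V) : ip v v = 1 -> `|v| = 1.
Proof.
rewrite (ipnorm hip) => /eqP; rewrite sqrf_eq1 => /orP[/eqP //|/eqP h].
by have := normr_ge0 v; rewrite h; lra.
Qed.

Lemma parallelogram (R : realType) (V : normedModType R) (ip : V -> V -> R)
  (hip : inner_product ip) (a b : V) :
  `|a - b| ^+ 2 + `|a + b| ^+ 2 = 2 * `|a| ^+ 2 + 2 * `|b| ^+ 2.
Proof.
rewrite -!(ipnorm hip) !(ipBl hip) !(ipDl hip) !(ipBr hip) !(ipDr hip) (ipC hip b a).
ring.
Qed.

Lemma fcomp_at (R : realType) (V W : normedModType R) (ipV : V -> V -> R)
  (e : nat -> V) (u : nat -> W) (a : R) (T t : nat) :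
  Defs.orthonormal ipV e -> (t < T)%N -> fcomp ipV e u a T (e t) = a *: u t.
Proof.
move=> he ht; rewrite /fcomp (bigD1 (Ordinal ht)) //= he eqxx mulr1 big1 ?addr0 //.
move=> i /eqP hi; rewrite he; suff /negbTE -> : t != i by rewrite mulr0 scale0r.
by apply/eqP => e0; apply: hi; apply: val_inj; rewrite /= e0.
Qed.

Lemma fcomp_Fp (R : realType) (V W : normedModType R) (ipV : V -> V -> R)
  (ipW : W -> W -> R) (hipV : inner_product ipV)
  (e : nat -> V) (u : nat -> W) (c : R) (p : \bar R) (T : nat) :
  Defs.orthonormal ipV e -> Defs.orthonormal ipW u ->
  0 < c -> (0 < T)%N -> (1 <= p)%E ->
  Fp ipV ipW p c (fcomp ipV e u (c * T%:R `^ (rate_exp p - 1)) T).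
Proof.
move=> he hu c0 T0 p1; split.
  by apply: fcomp_compact => // i; rewrite he eqxx.
exists (svT (c * T%:R `^ (rate_exp p - 1)) T); split; last exact: schatten_svT.
apply: fcomp_sv => //; rewrite mulr_ge0 ?powR_ge0 //; exact: ltW.
Qed.


Lemma step_int (R : realType) (W : normedModType R) (ipW : W -> W -> R)
  (hipW : inner_product ipW) (d : measure_display) (Om : measurableType d)
  (P : probability Om R) (a : Om -> W) (b : W) :
  (forall w : W, measurable_fun setT (fun om => `|a om - w|)) ->
  ~ ((`|b| ^+ 2)%:E <= \int[P]_om (`|a om - b| ^+ 2)%:E)%E ->
  ((`|b| ^+ 2)%:E <= \int[P]_om (`|a om + b| ^+ 2)%:E)%E.
Proof.
move=> ma hb.
have mf w : measurable_fun setT (fun om => ((`|a om - w| ^+ 2)%:E : \bar R)).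
  by apply/measurable_EFinP; apply: measurable_realfun.measurable_funX.
have mg : measurable_fun setT (fun om => ((`|a om + b| ^+ 2)%:E : \bar R)).
  have := mf (- b); by under eq_fun do rewrite opprK.
have hsum : ((2 * `|b| ^+ 2)%:E <= \int[P]_om (`|a om - b| ^+ 2)%:E
      + \int[P]_om (`|a om + b| ^+ 2)%:E)%E.
  rewrite -ge0_integralD //; try by move=> om _; rewrite lee_fin sqr_ge0.
  apply: le_trans (_ : (\int[P]_om (cst (2 * `|b| ^+ 2)%:E om) <= _)%E).
    rewrite integral_cst // [X in (_ * X)%E](_ : _ = 1%E) ?mule1 //; exact: probability_setT.
  apply: ge0_le_integral => //.
  - by move=> om _; rewrite lee_fin mulr_ge0 ?sqr_ge0.
  - exact: (emeasurable_funD (mf b) mg).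
  - move=> om _; rewrite /cst /= -EFinD lee_fin (parallelogram hipW).
    by rewrite lerDr mulr_ge0 ?sqr_ge0.
rewrite leNgt; apply/negP => hlt.
move/negP: hb; rewrite -ltNge => hb.
have := lteD hb hlt; rewrite -EFinD; move/(le_lt_trans hsum).
by rewrite lte_fin -mulr2n mulr_natl ltxx.
Qed.


Lemma rate_facts (R : realType) (p : \bar R) (T : nat) : (1 <= p)%E -> (0 < T)%N ->
  0 <= T%:R `^ (rate_exp p - 1) <= 1 /\
  T%:R `^ rate_exp p = T%:R `^ (rate_exp p - 1) * T%:R.
Proof.
move=> p1 T0.
have T1 : (1 : R) <= T%:R by rewrite ler1n.
split; last first.
  rewrite -{3}(@powRr1 _ T%:R) ?ler0n // -powRD; first by congr (_ `^ _); ring.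
  by apply/implyP => _; rewrite pnatr_eq0 -lt0n.
rewrite powR_ge0 /= -[X in _ <= X](powRr0 T%:R); apply: ler_powR => //.
case: p p1 => [r||] //=; rewrite lee_fin => hr.
have -> : 1 - r^-1 - 1 = - r^-1 by ring.
by rewrite oppr_le0 invr_ge0; lra.
Qed.

Lemma lower_bound (R : realType) (V W : completeNormedModType R)
  (ipV : V -> V -> R) (ipW : W -> W -> R)
  (hipV : inner_product ipV) (hipW : inner_product ipW)
  (infV : infinite_dimensional V) (infW : infinite_dimensional W)
  (c : R) (c_gt0 : 0 < c) (p : \bar R) (p_ge1 : (1 <= p)%E)
  (T : nat) (T0 : (0 < T)%N) (d : measure_display) (Om : measurableType d)
  (P : probability Om R) (A : learner Om V W) :
  valid_learner P c A ->
  ((c ^+ 2 * (T%:R `^ rate_exp p))%:E <= regret P A c (Fp ipV ipW p c) T)%E.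
Proof.
move=> [Abd Ameas].
pose e := GSseq ipV infV; have he : Defs.orthonormal ipV e := GSseq_orth hipV infV.
pose u := GSseq ipW infW; have hu : Defs.orthonormal ipW u := GSseq_orth hipW infW.
have ne t : `|e t| = 1 by apply: (unit_norm hipV); rewrite he eqxx.
have nu t : `|u t| = 1 by apply: (unit_norm hipW); rewrite hu eqxx.
pose yfun (s : nat -> R) (i : nat) : W := (c * s i) *: u i.
pose step (s : nat -> R) (t : nat) : R :=
  if ((c ^+ 2)%:E <= \int[P]_om (`|A om (history e (yfun s) t) (e t) - c *: u t| ^+ 2)%:E)%E
  then 1 else -1.
pose s := seqb 1 step.
have hs t : s t = step s t.
  apply: seqb_step => f g n hfg; rewrite /step.
  have -> // : history e (yfun f) n = history e (yfun g) n.
  rewrite /history; apply/eq_in_map => i; rewrite mem_iota => /andP[_ hi].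
  by rewrite /yfun hfg.
have hs1 t : s t = 1 \/ s t = -1 by rewrite hs /step; case: ifP; [left|right].
have hsq t : s t * s t = 1 by case: (hs1 t) => ->; rewrite ?mulr1 ?mulrNN ?mulr1.
have ns t : `|s t| = 1 by case: (hs1 t) => ->; rewrite ?normrN normr1.
pose y := yfun s.
have ny t : `|y t| = c by rewrite /y /yfun normrZ normrM ns nu !mulr1 gtr0_norm.
have hcu t : `|c *: u t| = c by rewrite normrZ nu mulr1 gtr0_norm.
have key t : ((c ^+ 2)%:E <=
    \int[P]_om (`|A om (history e y t) (e t) - y t| ^+ 2)%:E)%E.
  rewrite /y /yfun; move: (hs t); rewrite /step; case: ifP => hc ->.
    by rewrite mulr1.
  rewrite mulrN1 scaleNr opprK -{1}(hcu t).
  apply: (step_int hipW) => [w|]; first exact: Ameas.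
  by rewrite (hcu t) hc.
have mt t : measurable_fun setT
    (fun om => ((`|A om (history e y t) (e t) - y t| ^+ 2)%:E : \bar R)).
  by apply/measurable_EFinP; apply: measurable_funX; exact: Ameas.
pose I := (\int[P]_om (\sum_(t < T) `|A om (history e y t) (e t) - y t| ^+ 2)%:E)%E.
have hI : ((c ^+ 2 *+ T)%:E <= I)%E.
  rewrite /I; under eq_integral => om _ do rewrite -sumEFin.
  rewrite ge0_integral_sum //; try by move=> t om _; rewrite lee_fin sqr_ge0.
  rewrite -[in X in (X <= _)%E](card_ord T) -sumr_const -sumEFin.
  by apply: lee_sum => t _; exact: key.
pose u' i := s i *: u i.
have hu' : Defs.orthonormal ipW u'.
  move=> i j; rewrite /u' (ipZl hipW) (ipZr hipW) hu.
  case: (eqVneq i j) => [->|hij]; first by rewrite mulrA hsq mul1r.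
  by rewrite !mulr0.
have nu' t : `|u' t| = 1 by rewrite /u' normrZ ns nu mulr1.
have [/andP[b0 b1] hrate] := rate_facts p_ge1 T0.
set b := T%:R `^ (rate_exp p - 1) in b0 b1 hrate.
pose a := c * b.
pose f := fcomp ipV e u' a T.
have hf : Fp ipV ipW p c f by apply: fcomp_Fp.
pose J := ereal_inf [set (\sum_(t < T) `|g (e t) - y t| ^+ 2)%:E | g in Fp ipV ipW p c].
have hJ : (J <= ((c - a) ^+ 2 *+ T)%:E)%E.
  apply: ereal_inf_lbound; exists f => //; congr (_%:E).
  rewrite -[in RHS](card_ord T) -sumr_const; apply: eq_bigr => t _.
  rewrite /f fcomp_at // /y /yfun -scalerA -/(u' t) -scalerBl normrZ nu' mulr1.
  by rewrite distrC real_normK ?num_real.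
have hmem : [set r : \bar R | exists (x : nat -> V) (y : nat -> W),
    [/\ (forall t, `|x t| <= 1), (forall t, `|y t| <= c) &
     r = ((\int[P]_om (\sum_(t < T) `|A om (history x y t) (x t) - y t| ^+ 2)%:E)
          - ereal_inf [set (\sum_(t < T) `|f (x t) - y t| ^+ 2)%:E | f in Fp ipV ipW p c])%E]]
   (I - J)%E.
  exists e, y; split => //; first by move=> t; rewrite ne.
  by move=> t; rewrite ny.
apply: le_trans (ereal_sup_ubound hmem).
apply: le_trans (leeB hI hJ).
rewrite -EFinB lee_fin hrate /a !mulr_natr.
have T1 : (0 : R) <= T%:R by rewrite ler0n.
have hb1 : 0 <= 1 - b by rewrite subr_ge0.
have := mulr_ge0 (mulr_ge0 (sqr_ge0 c) T1) (mulr_ge0 hb1 b0).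
nra.
Qed.

Unset Implicit Arguments.

Theorem theorem4 (R : realType) (V W : completeNormedModType R)
  (ipV : V -> V -> R) (ipW : W -> W -> R)
  (hipV : inner_product ipV) (hipW : inner_product ipW)
  (sepV : separable V) (sepW : separable W)
  (infV : infinite_dimensional V) (infW : infinite_dimensional W)
  (c : R) (c_gt0 : 0 < c) (p : \bar R) (p_ge1 : (1 <= p)%E) :
  (forall T : nat, (0 < T)%N ->
     forall (d : measure_display) (Om : measurableType d)
            (P : probability Om R) (A : learner Om V W),
       valid_learner P c A ->
       ((c ^+ 2 * (T%:R `^ rate_exp p))%:E
          <= regret P A c (Fp ipV ipW p c) T)%E)
  /\ ~ online_learnable c (Fp ipV ipW +oo%E c).
Proof.
split.
  by move=> T T0 d Om P A hA; exact: lower_bound.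
move=> [d [Om [P [A [hA [g [hmono hlim hreg]]]]]]].
have hlow T : (0 < T)%N -> c ^+ 2 * T%:R <= g T.
  move=> T0; have := lower_bound hipV hipW infV infW c_gt0 (leey _) T0 hA.
  by rewrite hreg lee_fin /= powRr1 ?ler0n.
have c2 : 0 < c ^+ 2 by rewrite exprn_gt0.
have H := cvgr0_norm_lt _ hlim _ c2.
have [N _ hN] : exists2 N, True & forall n, (N <= n)%N -> `|g n / n%:R| < c ^+ 2.
  have [N _ hN'] := H; exists N => // n hn; exact: hN'.
have := hN N.+1 (leqnSn N).
have := hlow N.+1 (ltn0Sn N).
set t := N.+1%:R.
have t0 : 0 < t by rewrite /t ltr0n.
move=> hg; rewrite ger0_norm; last by rewrite divr_ge0 // (le_trans _ hg) ?mulr_ge0 ?sqr_ge0 ?ltW.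
rewrite ltr_pdivrMr // => hlt.
by have := lt_le_trans hlt hg; rewrite ltxx.
Qed.
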